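(* Let $G(\vec x)$ be a positive guard over the variables $\vec x$, and let $h$ be a history. Then the set of solutions of the guard instantiation problem $(h,G(\vec x))$ is finite. Moreover, every solution uses only constants that appear in $h$.
   Context: A history $h$ is a finite list of sessions $h_1,\dots,h_{|h|}$. Each session is a finite set of events $p(c_1,\dots,c_n)$, where $p$ is an uninterpreted predicate symbol and the $c_i$ are constants. Simple guards are generated by the grammar $$\gamma::=p(\vec u)\mid\gamma\wedge\gamma\mid\mathbf{G}^{-1}\gamma\mid\mathbf{F}^{-1}\gamma,$$ where $\vec u$ is a list of variables and constants (no function symbols). Positive guards $G(\vec x)$ over variables $\vec x$ are formulas whose only variables are among $\vec x$, generated by $$G::=\gamma(\vec x)\mid G\wedge G\mid G\vee G\mid\mathbf{G}^{-1}G\mid\mathbf{F}^{-1}G\mid G\,\mathbf{S}\,G.$$ For closed formulas and $1\le i\le|h|$: - $(h,i)\models p(\vec c)$ iff $p(\vec c)\in h_i$; - $\wedge$ and $\vee$ are interpreted classically; - $(h,i)\models\psi_1\,\mathbf{S}\,\psi_2$ iff there is $j\le i$ with $(h,j)\models\psi_2$ and $(h,k)\models\psi_1$ for all $k$ with $j<k\le i$; - $\mathbf{F}^{-1}\psi$ holds at $i$ iff $\psi$ holds at some $j\le i$; - $\mathbf{G}^{-1}\psi$ holds at $i$ iff $\psi$ holds at all $j\le i$. We write $h\models\psi$ for $(h,|h|)\models\psi$. The guard instantiation problem $(h,G(\vec x))$ asks for a list $\vec u$ of constants such that $h\models G(\vec u)$. Any such list is called a solution. *)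

(* Defs.v *)
From Stdlib Require Import List Arith.
Import ListNotations.
Set Implicit Arguments.

Inductive term (C : Type) : Type :=
| TVar : nat -> term C
| TCst : C -> term C.
Arguments TVar {C} _.
Arguments TCst {C} _.

(* Simple guards: gamma ::= p(u) | gamma /\ gamma | G^-1 gamma | F^-1 gamma *)
Inductive sguard (P C : Type) : Type :=
| SAtom : P -> list (term C) -> sguard P C
| SAnd  : sguard P C -> sguard P C -> sguard P C
| SHist : sguard P C -> sguard P C
| SOnce : sguard P C -> sguard P C.

(* Positive guards: G ::= gamma(x) | G/\G | G\/G | G^-1 G | F^-1 G | G S G *)
Inductive pguard (P C : Type) : Type :=
| PSimple : sguard P C -> pguard P C
| PAnd   : pguard P C -> pguard P C -> pguard P C
| POr    : pguard P C -> pguard P C -> pguard P C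
| PHist  : pguard P C -> pguard P C
| POnce  : pguard P C -> pguard P C
| PSince : pguard P C -> pguard P C -> pguard P C.

(* Events p(c1,...,cn), sessions (finite sets of events, as lists),
   histories (finite lists of sessions). *)
Definition event (P C : Type) : Type := (P * list C)%type.
Definition session (P C : Type) : Type := list (event P C).
Definition history (P C : Type) : Type := list (session P C).

Fixpoint svars {P C : Type} (s : sguard P C) : list nat :=
  match s with
  | SAtom _ ts => flat_map (fun t => match t with TVar x => [x] | TCst _ => [] end) ts
  | SAnd a b => svars a ++ svars b
  | SHist a => svars a
  | SOnce a => svars a
  end.

Fixpoint positive_guard {P C : Type} (xs : list nat) (G : pguard P C) : Prop :=
  match G with
  | PSimple s => forall v, In v (svars s) <-> In v xs
  | PAnd a b | POr a b | PSince a b => positive_guard xs a /\ positive_guard xs b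
  | PHist a | POnce a => positive_guard xs a
  end.

Fixpoint lookup {C : Type} (xs : list nat) (u : list C) (x : nat) : option C :=
  match xs, u with
  | y :: xs', c :: u' => if Nat.eqb x y then Some c else lookup xs' u' x
  | _, _ => None
  end.

Definition subst_term {C : Type} (xs : list nat) (u : list C) (t : term C) : term C :=
  match t with
  | TVar x => match lookup xs u x with Some c => TCst c | None => TVar x end
  | TCst c => TCst c
  end.

Fixpoint ssubst {P C : Type} (xs : list nat) (u : list C) (s : sguard P C) : sguard P C :=
  match s with
  | SAtom p ts => SAtom p (map (subst_term xs u) ts)
  | SAnd a b => SAnd (ssubst xs u a) (ssubst xs u b)
  | SHist a => SHist (ssubst xs u a)
  | SOnce a => SOnce (ssubst xs u a)
  end.

Fixpoint psubst {P C : Type} (xs : list nat) (u : list C) (G : pguard P C) : pguard P C :=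
  match G with
  | PSimple s => PSimple (ssubst xs u s)
  | PAnd a b => PAnd (psubst xs u a) (psubst xs u b)
  | POr a b => POr (psubst xs u a) (psubst xs u b)
  | PHist a => PHist (psubst xs u a)
  | POnce a => POnce (psubst xs u a)
  | PSince a b => PSince (psubst xs u a) (psubst xs u b)
  end.

(* Semantics of closed formulas at position i (1-based: h_i = nth (i-1) h). *)
Definition term_val {C : Type} (t : term C) : option C :=
  match t with TVar _ => None | TCst c => Some c end.

Fixpoint ssat {P C : Type} (h : history P C) (i : nat) (s : sguard P C) : Prop :=
  match s with
  | SAtom p ts =>
      1 <= i <= length h /\
      exists cs, map term_val ts = map Some cs /\ In (p, cs) (nth (i - 1) h [])
  | SAnd a b => ssat h i a /\ ssat h i b
  | SHist a => forall j, 1 <= j <= i -> ssat h j a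
  | SOnce a => exists j, 1 <= j <= i /\ ssat h j a
  end.

Fixpoint psat {P C : Type} (h : history P C) (i : nat) (G : pguard P C) : Prop :=
  match G with
  | PSimple s => ssat h i s
  | PAnd a b => psat h i a /\ psat h i b
  | POr a b => psat h i a \/ psat h i b
  | PHist a => forall j, 1 <= j <= i -> psat h j a
  | POnce a => exists j, 1 <= j <= i /\ psat h j a
  | PSince a b => exists j, 1 <= j <= i /\ psat h j b /\
                    forall k, j < k <= i -> psat h k a
  end.

(* h |= psi  iff  (h, |h|) |= psi  (only meaningful for nonempty h). *)
Definition models {P C : Type} (h : history P C) (G : pguard P C) : Prop :=
  1 <= length h /\ psat h (length h) G.

Definition is_solution {P C : Type} (h : history P C) (xs : list nat)
  (G : pguard P C) (u : list C) : Prop :=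
  length u = length xs /\ models h (psubst xs u G).

Definition appears_in {P C : Type} (h : history P C) (c : C) : Prop :=
  exists s, In s h /\ exists e, In e s /\ In c (snd e).

(* Main.v *)
Require Import Defs.
From Stdlib Require Import List Arith Lia.
Import ListNotations.

Definition Qc {P C : Type} (h : history P C) (c : C) : Prop :=
  exists j p cs, 1 <= j <= length h /\ In c cs /\ In (p, cs) (nth (j - 1) h []).

Lemma lookup_in {C : Type} (xs : list nat) (u : list C) c :
  NoDup xs -> length u = length xs -> In c u ->
  exists x, In x xs /\ lookup xs u x = Some c.
Proof.
  revert u; induction xs as [|y xs IH]; intros [|c' u] Hnd Hl Hc; simpl in *; try lia; try tauto.
  inversion Hnd; subst.
  destruct Hc as [<-|Hc].
  - exists y. rewrite Nat.eqb_refl. auto.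
  - destruct (IH u H2 ltac:(lia) Hc) as [x [Hx Hlk]].
    exists x. split; auto. destruct (Nat.eqb_spec x y); subst; tauto.
Qed.

Lemma ssat_Q {P C : Type} (h : history P C) xs u x c (s : sguard P C) :
  forall j, ssat h j (ssubst xs u s) -> 1 <= j -> In x (svars s) ->
  lookup xs u x = Some c -> Qc h c.
Proof.
  induction s; intros j Hs Hj Hx Hlk; simpl in *.
  - destruct Hs as [Hjl [cs [Hm Hin]]].
    exists j, p, cs. split; [lia|]. split; auto.
    apply in_flat_map in Hx. destruct Hx as [t [Ht Hx]].
    destruct t as [y|d]; simpl in Hx; [|tauto].
    destruct Hx as [Hy|[]]; subst y.
    assert (Hi : In (term_val (subst_term xs u (TVar x))) (map term_val (map (subst_term xs u) l))).
    { apply in_map. apply in_map. auto. }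
    rewrite Hm in Hi. simpl in Hi. rewrite Hlk in Hi. simpl in Hi.
    apply in_map_iff in Hi. destruct Hi as [c' [E H]]. inversion E; subst; auto.
  - apply in_app_or in Hx. destruct Hs. destruct Hx; eauto.
  - eapply IHs; eauto.
  - destruct Hs as [j' [Hj' H]]. eapply IHs; eauto; lia.
Qed.

Lemma psat_Q {P C : Type} (h : history P C) xs u x c (G : pguard P C) :
  positive_guard xs G -> In x xs -> lookup xs u x = Some c ->
  forall i, psat h i (psubst xs u G) -> 1 <= i -> Qc h c.
Proof.
  intros Hpg Hx Hlk. induction G; intros i Hs Hi; simpl in *.
  - eapply ssat_Q; eauto. apply Hpg; auto.
  - destruct Hpg as [Ha Hb], Hs as [Sa Sb]; eauto.
  - destruct Hpg as [Ha Hb]; destruct Hs as [Sa|Sb]; eauto.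
  - eapply IHG; eauto.
  - destruct Hs as [j [Hj Hq]]. eapply IHG; eauto; lia.
  - destruct Hpg as [Ha Hb]. destruct Hs as [j [Hj [Hq _]]]. eapply IHG2; eauto; lia.
Qed.

Fixpoint allLists {C : Type} (n : nat) (l : list C) : list (list C) :=
  match n with
  | 0 => [[]]
  | S n => flat_map (fun c => map (cons c) (allLists n l)) l
  end.

Lemma allLists_in {C : Type} (l : list C) u :
  (forall c, In c u -> In c l) -> In u (allLists (length u) l).
Proof.
  induction u; simpl; intros H; auto.
  apply in_flat_map. exists a. split; auto. apply in_map. auto.
Qed.

Theorem mainTheorem7 (P C : Type) (xs : list nat) (G : pguard P C) (h : history P C) :
  NoDup xs -> positive_guard xs G ->
  (exists L : list (list C), forall u, is_solution h xs G u -> In u L) /\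
  (forall u, is_solution h xs G u -> forall c, In c u -> appears_in h c).
Proof.
  intros Hnd Hpg.
  assert (H2 : forall u, is_solution h xs G u -> forall c, In c u -> appears_in h c).
  { intros u [Hl [Hh Hs]] c Hc.
    destruct (lookup_in xs u c Hnd Hl Hc) as [x [Hx Hlk]].
    destruct (psat_Q h xs u x c G Hpg Hx Hlk _ Hs Hh) as [j [p [cs [Hj [Hc' Hin]]]]].
    exists (nth (j - 1) h []). split.
    - apply nth_In. lia.
    - exists (p, cs). auto. }
  split; auto.
  exists (allLists (length xs) (flat_map (fun s => flat_map snd s) h)).
  intros u Hu. pose proof (H2 u Hu) as H. destruct Hu as [Hl _]. rewrite <- Hl.
  apply allLists_in. intros c Hc. destruct (H c Hc) as [s [Hs [e [He Hce]]]].
  apply in_flat_map. exists s. split; auto. apply in_flat_map. eauto.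
Qed.
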